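(* Let $n\ge 5$, $q>5$, and let $u\in C^{6}(\mathbb{R}^{n})$, $u>0$, be a radially symmetric solution of $\Delta^{3}u=u^{-q}$ in $\mathbb{R}^{n}$ such that $\liminf_{|x|\to+\infty}u(x)/|x|\in(0,+\infty]$ and $\lim_{r\to+\infty}u''(r)=\rho\in\mathbb{R}$ exists. Then $\rho\ge 0$. If $\rho>0$, then $\lim_{|x|\to+\infty}u(x)/|x|^{2}=\rho/2$. If $\rho=0$, then $$\lim_{|x|\to+\infty}\frac{u(x)}{|x|}=-\frac{1}{n-1}\int_{0}^{+\infty}t^{2}\Big(\Delta^{2}\bar u(t)-\frac{n-3}{t}(\Delta\bar u)'(t)\Big)dt\in(0,+\infty).$$
   Context: $u(r)$ denotes $u(x)$ with $r=|x|$; $\bar u(r)$ is the spherical average of $u$ over $\partial B_r(0)$ (equal to $u(r)$ here), and $\Delta\bar u$, $\Delta^{2}\bar u$ are the radial Laplacians, $\Delta f(r)=r^{1-n}(r^{n-1}f'(r))'$. *)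

(* Defs.v *)
From HB Require Import structures.
From mathcomp Require Import all_boot all_order all_algebra.
From mathcomp Require Import all_classical all_reals all_analysis.
Set Implicit Arguments. Unset Strict Implicit. Unset Printing Implicit Defensive.
Import Order.TTheory GRing.Theory Num.Theory.
Import numFieldNormedType.Exports.
Local Open Scope ring_scope.

Section Defs.
Variable R : realType.

Definition ebasis n (i : 'I_n) : 'rV[R]_n := \row_j (i == j)%:R.

(* first basis vector e_1 (= 0 if n = 0) *)
Definition e1 n : 'rV[R]_n := \row_j (nat_of_ord j == 0)%N%:R.

Definition enorm n (x : 'rV[R]_n) : R := Num.sqrt (\sum_i (x ord0 i) ^+ 2).

Definition partial n (i : 'I_n) (f : 'rV[R]_n -> R) : 'rV[R]_n -> R :=
  fun x => 'D_(ebasis i) f x.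

Definition lap n (f : 'rV[R]_n -> R) : 'rV[R]_n -> R :=
  fun x => \sum_i partial i (partial i f) x.

Fixpoint Ck n (k : nat) (f : 'rV[R]_n -> R) : Prop :=
  match k with
  | 0%N => continuous f
  | k'.+1 => continuous f /\ (forall i x, derivable f x (ebasis i)) /\
             (forall i, Ck k' (partial i f))
  end.

Definition radlap (n : nat) (f : R -> R) : R -> R :=
  fun r => (r ^+ n.-1)^-1 * derive1 (fun s => s ^+ n.-1 * derive1 f s) r.

End Defs.

(* Main.v *)
Require Import Defs.
From HB Require Import structures.
From mathcomp Require Import all_boot all_order all_algebra.
From mathcomp Require Import all_classical all_reals all_analysis.
From mathcomp.algebra_tactics Require Import ring lra.
Import Order.TTheory GRing.Theory Num.Theory.
Import numFieldNormedType.Exports.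
Local Open Scope ring_scope.
Local Open Scope classical_set_scope.

Set Implicit Arguments. Unset Strict Implicit.

Section OneD.
Variable R : realType.
Implicit Types (f g : R -> R) (x a L : R).

Definition hd f x d := derivable f x 1 /\ (derive1 f) x = d.

Lemma hd_deriv f x : derivable f x 1 -> hd f x ((derive1 f) x).
Proof. by []. Qed.

Lemma hd_add f g x a b : hd f x a -> hd g x b -> hd (fun t => f t + g t) x (a + b).
Proof.
move=> [df fa] [dg gb]; split; first exact: derivableD.
by rewrite derive1E deriveD // -!derive1E fa gb.
Qed.

Lemma hd_opp f x a : hd f x a -> hd (fun t => - f t) x (- a).
Proof.
move=> [df fa]; split; first exact: derivableN.
by rewrite derive1E deriveN // -!derive1E fa.
Qed.

Lemma hd_sub f g x a b : hd f x a -> hd g x b -> hd (fun t => f t - g t) x (a - b).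
Proof. by move=> h1 h2; apply: hd_add => //; apply: hd_opp. Qed.

Lemma hd_mul f g x a b : hd f x a -> hd g x b ->
  hd (fun t => f t * g t) x (a * g x + f x * b).
Proof.
move=> [df fa] [dg gb]; split; first exact: derivableM.
rewrite derive1E deriveM // -!derive1E fa gb /=. rewrite /GRing.scale /=.
by rewrite addrC mulrC.
Qed.

Lemma hd_cst c x : hd (fun=> c) x 0.
Proof. split; first exact: derivable_cst. by rewrite derive1_cst. Qed.

Lemma hd_id x : hd id x 1.
Proof. split; first exact: derivable_id. by rewrite derive1E derive_id. Qed.

Lemma hd_scale c f x a : hd f x a -> hd (fun t => c * f t) x (c * a).
Proof.
move=> h; have := hd_mul (hd_cst c x) h.
by rewrite mul0r add0r.
Qed.

Lemma hd_comp f g x a b : hd f x a -> hd g (f x) b -> hd (fun t => g (f t)) x (b * a).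
Proof.
move=> [df fa] [dg gb]; split.
  apply/derivable1_diffP; apply: (@differentiable_comp _ _ _ _ f g).
  exact/derivable1_diffP. exact/derivable1_diffP.
have -> : (fun t => g (f t)) = g \o f by [].
by rewrite derive1_comp // fa gb.
Qed.

Lemma hd_inv f x a : f x != 0 -> hd f x a -> hd (fun t => (f t)^-1) x (- a / (f x) ^+ 2).
Proof.
move=> fx0 [df fa]; split; first exact: derivableV.
rewrite derive1E deriveV // -derive1E fa /GRing.scale /=.
by rewrite mulrC mulNr mulrN.
Qed.

Lemma hd_pow k x : hd (fun t => t ^+ k) x (k%:R * x ^+ k.-1).
Proof.
split; first exact: exprn_derivable.
by rewrite exp_derive1 /GRing.scale /=.
Qed.

Lemma hd_sqrt x : 0 < x -> hd Num.sqrt x (2 * Num.sqrt x)^-1.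
Proof.
move=> x0; have h := is_derive1_sqrt x0; split; first exact: ex_derive.
by rewrite derive1E derive_val.
Qed.

Lemma hd_ext f g x d : {near x, f =1 g} -> hd f x d -> hd g x d.
Proof.
move=> fg [df fd]; split; first exact: near_eq_derivable df.
by rewrite derive1E -(near_eq_derive _ fg) -derive1E.
Qed.

Lemma hd_eq f (t a b : R) : hd f t a -> a = b -> hd f t b.
Proof. by move=> h <-. Qed.

Lemma hd_uniq f x a b : hd f x a -> hd f x b -> a = b.
Proof. by move=> [_ <-] [_ <-]. Qed.

Lemma mono_ge0 f a : (forall x, a < x -> derivable f x 1) ->
  (forall x, a < x -> 0 <= (derive1 f) x) -> forall x y, a < x -> x <= y -> f x <= f y.
Proof.
move=> df d0 x y ax xy.
apply: (@ger0_derive1_ndecr R f x y) => //.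
- by move=> z; rewrite in_itv /= => /andP[xz _]; apply: df; apply: lt_trans xz.
- by move=> z; rewrite in_itv /= => /andP[xz _]; apply: d0; apply: lt_trans xz.
- apply: derivable_within_continuous => z; rewrite in_itv /= => /andP[xz _].
  by apply: df; apply: lt_le_trans xz.
Qed.

Lemma mono_gt0 f a : (forall x, a < x -> derivable f x 1) ->
  (forall x, a < x -> 0 < (derive1 f) x) -> forall x y, a < x -> x < y -> f x < f y.
Proof.
move=> df d0 x y ax xy.
apply: (@gtr0_derive1_lt_cc R f x y) => //.
- by move=> z; rewrite in_itv /= => /andP[xz _]; apply: df; apply: lt_trans xz.
- by move=> z; rewrite in_itv /= => /andP[xz _]; apply: d0; apply: lt_trans xz.
- apply: derivable_within_continuous => z; rewrite in_itv /= => /andP[xz _].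
  by apply: df; apply: lt_le_trans xz.
- by rewrite in_itv /= lexx ltW.
- by rewrite in_itv /= lexx ltW.
Qed.


Definition tends f L := forall e, 0 < e -> exists M, forall r, M < r -> `|f r - L| < e.
Definition toinf f := forall B, exists M, forall r, M < r -> B < f r.

Lemma tends_cvg f L : tends f L <-> f r @[r --> +oo] --> L.
Proof.
split.
  move=> h; apply/cvgrPdist_lt => e e0; have [M hM] := h e e0.
  exists M; split; first exact: num_real.
  by move=> r Mr; rewrite distrC; apply: hM.
move=> /cvgrPdist_lt h e e0; have [M [_ hM]] := h e e0.
by exists M => r Mr; rewrite distrC; apply: hM.
Qed.

Lemma tends_ext f g L a : (forall r, a < r -> f r = g r) -> tends f L -> tends g L.
Proof.
move=> fg h e e0; have [M hM] := h e e0; exists (Num.max M a) => r.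
rewrite gt_max => /andP[Mr ar]; rewrite -fg //; exact: hM.
Qed.

Lemma tendsD f g a b : tends f a -> tends g b -> tends (fun r => f r + g r) (a + b).
Proof. by move=> /tends_cvg hf /tends_cvg hg; apply/tends_cvg; apply: cvgD. Qed.

Lemma tendsM f g a b : tends f a -> tends g b -> tends (fun r => f r * g r) (a * b).
Proof. by move=> /tends_cvg hf /tends_cvg hg; apply/tends_cvg; apply: cvgM. Qed.

Lemma tends_cst c : tends (fun=> c) c.
Proof. by move=> e e0; exists 0 => r _; rewrite subrr normr0. Qed.

Lemma tendsZ c f a : tends f a -> tends (fun r => c * f r) (c * a).
Proof. by move=> h; apply: tendsM => //; apply: tends_cst. Qed.

Lemma tendsN f a : tends f a -> tends (fun r => - f r) (- a).
Proof.
by move=> h e e0; have [M hM] := h e e0; exists M => r /hM; rewrite -opprD normrN.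
Qed.

Lemma maxp1 (M a : R) : M < Num.max M a + 1 /\ a < Num.max M a + 1.
Proof.
split; apply: (@le_lt_trans _ _ (Num.max M a)); rewrite ?le_max ?lexx ?orbT //;
 by rewrite ltrDl.
Qed.

Lemma tends_ge f L a c : tends f L -> (forall r, a < r -> c <= f r) -> c <= L.
Proof.
move=> h hc; rewrite leNgt; apply/negP => Lc.
have cL : 0 < c - L by rewrite subr_gt0.
have [M hM] := h _ cL.
pose r := Num.max M a + 1.
have [Mr ar] := maxp1 M a.
have := hM r Mr; have := hc r ar => cf.
rewrite ltr_norml => /andP[_]; rewrite ltrBlDr subrK => /(le_lt_trans cf).
by rewrite ltxx.
Qed.

Lemma tends_le f L a c : tends f L -> (forall r, a < r -> f r <= c) -> L <= c.
Proof.
move=> h hc; rewrite -lerN2; apply: (tends_ge (a:=a) (tendsN h)) => r ar.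
by rewrite lerN2; apply: hc.
Qed.

Lemma toinf_ge f B : toinf f -> exists M, forall r, M < r -> B <= f r.
Proof. by move=> h; have [M hM] := h B; exists M => r /hM /ltW. Qed.

Lemma grow_lb f g a m m' : (forall r, a < r -> derivable f r 1) ->
  (forall r, a < r -> derivable g r 1) ->
  (forall r, a < r -> m * (derive1 g) r <= (derive1 f) r) -> toinf g -> m' < m ->
  exists M, forall r, M < r -> m' * g r <= f r.
Proof.
move=> df dg hfg gi mm.
pose h := fun t => f t - m * g t.
have hd' r : a < r -> hd h r ((derive1 f) r - m * (derive1 g) r).
  by move=> ar; apply: hd_sub; [exact: hd_deriv (df r ar)| apply: hd_scale; exact: hd_deriv (dg r ar)].
have hinc : forall x y, a < x -> x <= y -> h x <= h y.
  apply: mono_ge0 => r ar; first by have [] := hd' r ar.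
  by have [_ ->] := hd' r ar; rewrite subr_ge0; apply: hfg.
pose C := h (a + 1).
have [M hM] := toinf_ge (`|C| / (m - m')) gi.
exists (Num.max M (a + 1)) => r; rewrite gt_max => /andP[Mr ar].
have a1 : a < a + 1 by rewrite ltrDl.
have := hinc (a + 1) r a1 (ltW ar); rewrite -/C /h => Cle.
have gr := hM r Mr.
have mm0 : 0 < m - m' by rewrite subr_gt0.
have : `|C| <= (m - m') * g r by rewrite mulrC -ler_pdivrMr.
rewrite mulrBl => H.
have : - `|C| <= C by rewrite lerNl -normrN ler_norm.
move=> HC.
lra.
Qed.


Lemma grow_ub f g a m m' : (forall r, a < r -> derivable f r 1) ->
  (forall r, a < r -> derivable g r 1) ->
  (forall r, a < r -> derive1 f r <= m * derive1 g r) -> toinf g -> m < m' ->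
  exists M, forall r, M < r -> f r <= m' * g r.
Proof.
move=> df dg hfg gi mm.
have hN r : a < r -> hd (fun t => - f t) r (- derive1 f r).
  by move=> ar; apply: hd_opp; apply: hd_deriv; apply: df.
have [M hM] := @grow_lb (fun t => - f t) g a (- m) (- m')
  (fun r ar => (hN r ar).1) dg
  (fun r ar => ltac:(rewrite (hN r ar).2 mulNr lerN2; exact: hfg)) gi
  (ltac:(by rewrite ltrN2)).
by exists M => r /hM; rewrite mulNr lerN2.
Qed.

Lemma ratio_bounds (t g' L e : R) : 0 < g' -> `|t - L| < e ->
  (L - e) * g' <= t * g' <= (L + e) * g'.
Proof.
move=> g0; rewrite ltr_norml => /andP[h1 h2].
rewrite !ler_pM2r //; apply/andP; split; lra.
Qed.

Lemma ratio_bounds_neg (t g' L e : R) : g' < 0 -> `|t - L| < e ->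
  (L + e) * g' <= t * g' <= (L - e) * g'.
Proof.
move=> g0; rewrite ltr_norml => /andP[h1 h2].
rewrite !ler_nM2r //; apply/andP; split; lra.
Qed.

Lemma lhop_inf f g a L : (forall r, a < r -> derivable f r 1) ->
  (forall r, a < r -> derivable g r 1) -> (forall r, a < r -> 0 < derive1 g r) ->
  toinf g -> tends (fun r => derive1 f r / derive1 g r) L ->
  tends (fun r => f r / g r) L.
Proof.
move=> df dg g0 gi h e e0.
have e20 : 0 < e / 2 by rewrite divr_gt0.
have [M1 hM1] := h _ e20.
pose a' := Num.max a M1.
have aa r : a' < r -> a < r /\ M1 < r by rewrite gt_max => /andP[].
have df' r : a' < r -> derivable f r 1 by move=> /aa[+ _]; apply: df.
have dg' r : a' < r -> derivable g r 1 by move=> /aa[+ _]; apply: dg.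
have key r : a' < r -> (L - e / 2) * derive1 g r <= derive1 f r <= (L + e / 2) * derive1 g r.
  move=> /aa[ar Mr]; have := ratio_bounds (g0 r ar) (hM1 r Mr).
  by rewrite divfK // gt_eqF // g0.
have [M2 hM2] := grow_lb df' dg' (fun r ar => (andP (key r ar)).1) gi
  (ltac:(lra) : L - e * (3/4) < L - e / 2).
have [M3 hM3] := grow_ub df' dg' (fun r ar => (andP (key r ar)).2) gi
  (ltac:(lra) : L + e / 2 < L + e * (3/4)).
have [M4 hM4] := gi 0.
exists (Num.max (Num.max M2 M3) M4) => r; rewrite !gt_max => /andP[/andP[r2 r3] r4].
have gr := hM4 r r4; have l1 := hM2 r r2; have l2 := hM3 r r3.
have T1 : L - e * (3/4) <= f r / g r by rewrite ler_pdivlMr.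
have T2 : f r / g r <= L + e * (3/4) by rewrite ler_pdivrMr.
rewrite ltr_norml; apply/andP; split; lra.
Qed.

Lemma incr_le_lim h a l : (forall x y, a < x -> x <= y -> h x <= h y) -> tends h l ->
  forall x, a < x -> h x <= l.
Proof.
move=> hi hl x ax; apply: (tends_ge (a:=x) hl) => r xr; apply: hi => //.
exact: ltW.
Qed.

Lemma lhop0 f g a L : (forall r, a < r -> derivable f r 1) ->
  (forall r, a < r -> derivable g r 1) -> (forall r, a < r -> derive1 g r < 0) ->
  tends f 0 -> tends g 0 -> tends (fun r => derive1 f r / derive1 g r) L ->
  tends (fun r => f r / g r) L.
Proof.
move=> df dg g0 f0 gl h e e0.
have e20 : 0 < e / 2 by rewrite divr_gt0.
have [M1 hM1] := h _ e20.
pose a' := Num.max a M1.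
have aa r : a' < r -> a < r /\ M1 < r by rewrite gt_max => /andP[].
have gpos r : a < r -> 0 < g r.
  move=> ar.
  have hN r' : a < r' -> hd (fun t => - g t) r' (- derive1 g r').
    by move=> ar'; apply: hd_opp; apply: hd_deriv; apply: dg.
  have inc : forall x y, a < x -> x <= y -> - g x <= - g y.
    apply: mono_ge0 => r' ar'; first exact: (hN r' ar').1.
    by rewrite (hN r' ar').2 oppr_ge0 ltW // g0.
  have ar1 : a < r + 1 by apply: (lt_trans ar); rewrite ltrDl.
  have := incr_le_lim inc (tendsN gl) ar1 ; rewrite oppr0 oppr_le0.
  move=> g1; apply: (le_lt_trans g1).
  have sinc : forall x y, a < x -> x < y -> - g x < - g y.
    apply: mono_gt0 => r' ar'; first exact: (hN r' ar').1.
    by rewrite (hN r' ar').2 oppr_gt0 g0.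
  by rewrite -ltrN2; apply: sinc => //; rewrite ltrDl.
have key r : a' < r -> (L + e / 2) * derive1 g r <= derive1 f r <= (L - e / 2) * derive1 g r.
  move=> /aa[ar Mr]; have := ratio_bounds_neg (g0 r ar) (hM1 r Mr).
  by rewrite divfK // lt_eqF // g0.
have hd1 r : a < r -> hd (fun t => f t - (L + e/2) * g t) r (derive1 f r - (L + e/2) * derive1 g r).
  move=> ar; apply: hd_sub; first exact: hd_deriv (df r ar).
  by apply: hd_scale; exact: hd_deriv (dg r ar).
have hd2 r : a < r -> hd (fun t => (L - e/2) * g t - f t) r ((L - e/2) * derive1 g r - derive1 f r).
  move=> ar; apply: hd_sub; last exact: hd_deriv (df r ar).
  by apply: hd_scale; exact: hd_deriv (dg r ar).
have inc1 : forall x y, a' < x -> x <= y -> f x - (L + e/2) * g x <= f y - (L + e/2) * g y.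
  apply: mono_ge0 => r ar; first exact: (hd1 r (aa r ar).1).1.
  by rewrite (hd1 r (aa r ar).1).2 subr_ge0; exact: (andP (key r ar)).1.
have inc2 : forall x y, a' < x -> x <= y -> (L - e/2) * g x - f x <= (L - e/2) * g y - f y.
  apply: mono_ge0 => r ar; first exact: (hd2 r (aa r ar).1).1.
  by rewrite (hd2 r (aa r ar).1).2 subr_ge0; exact: (andP (key r ar)).2.
have t1 : tends (fun t => f t - (L + e/2) * g t) 0.
  by rewrite -[0](subr0 0) -{2}(mulr0 (L + e/2)); apply: tendsD f0 (tendsN (tendsZ _ gl)).
have t2 : tends (fun t => (L - e/2) * g t - f t) 0.
  by rewrite -[0](subr0 0) -{1}(mulr0 (L - e/2)); apply: tendsD (tendsZ _ gl) (tendsN f0).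
exists a' => r ar.
have u1 := incr_le_lim inc1 t1 ar; have u2 := incr_le_lim inc2 t2 ar.
have gr := gpos r (aa r ar).1.
have T1 : L - e / 2 <= f r / g r by rewrite ler_pdivlMr //; lra.
have T2 : f r / g r <= L + e / 2 by rewrite ler_pdivrMr //; lra.
rewrite ltr_norml; apply/andP; split; lra.
Qed.


Lemma toinf_id : toinf id.
Proof. by move=> B; exists B. Qed.

Lemma toinf_pow j : (0 < j)%N -> toinf (fun r => r ^+ j).
Proof.
move=> j0 B; exists (Num.max B 1) => r; rewrite gt_max => /andP[Br r1].
by apply: (lt_le_trans Br); apply: ler_eXnr => //; apply: ltW.
Qed.

Lemma toinf_inv g : toinf g -> tends (fun r => (g r)^-1) 0.
Proof.
move=> gi e e0; have [M hM] := gi e^-1; exists M => r /hM ge.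
have g0 : 0 < g r by apply: lt_trans ge; rewrite invr_gt0.
rewrite subr0 gtr0_norm ?invr_gt0 //.
by rewrite invf_plt ?posrE // invr_gt0.
Qed.

Lemma hd_powp k r : (0 < k)%N -> 0 < r -> hd (fun t => t ^+ k) r (k%:R * r ^+ k.-1) /\
  0 < k%:R * r ^+ k.-1.
Proof. by move=> k0 r0; split; [exact: hd_pow| rewrite mulr_gt0 ?ltr0n ?exprn_gt0]. Qed.

End OneD.

Section ODE.
Variable R : realType.

Lemma flux k (Q : R -> R) r : (0 < k)%N -> 0 < r -> derivable (derive1 Q) r 1 ->
  hd (fun t => t ^+ k * derive1 Q t) r
     (r ^+ k * (derive1 (derive1 Q) r + k%:R / r * derive1 Q r)).
Proof.
move=> hk r0 dQ; have := hd_mul (hd_pow k r) (hd_deriv dQ).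
case: k hk => // k' _; rewrite /= => h.
suff -> : r ^+ k'.+1 * (derive1 (derive1 Q) r + k'.+1%:R / r * derive1 Q r) =
  k'.+1%:R * r ^+ k' * derive1 Q r + r ^+ k'.+1 * derive1 (derive1 Q) r by [].
rewrite exprS; field; exact: lt0r_neq0.
Qed.

Lemma growth k (Q D S : R -> R) a eps : 0 < eps -> 0 <= a ->
  (forall r, a < r -> hd Q r (D r)) ->
  (forall r, a < r -> hd (fun t => t ^+ k * D t) r (r ^+ k * S r)) ->
  (forall r, a < r -> eps <= S r) -> ~ tends Q 0.
Proof.
move=> e0 a0 hQ hH hS tQ.
have k0 : (0 < k.+1)%N by [].
pose m := eps / k.+1%:R.
have m0 : 0 < m by rewrite divr_gt0 ?ltr0n.
have Hcmp r : a < r -> m * derive1 (fun t => t ^+ k.+1) r <= derive1 (fun t => t ^+ k * D t) r.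
  move=> ar; have r0 : 0 < r by apply: le_lt_trans ar.
  rewrite (hH r ar).2 (hd_pow k.+1 r).2 /= mulrA /m divfK ?pnatr_eq0 //.
  by rewrite mulrC ler_pM2l ?exprn_gt0 //; exact: hS.
have [M1 hM1] := @grow_lb R (fun t => t ^+ k * D t) (fun t => t ^+ k.+1) a m (m / 2)
  (fun r ar => (hH r ar).1) (fun r ar => (hd_pow k.+1 r).1) Hcmp
  (toinf_pow k0) (ltac:(lra)).
pose a2 := Num.max M1 a.
have a2a r : a2 < r -> a < r /\ M1 < r by rewrite gt_max => /andP[].
have hD r : a2 < r -> m / 2 * r <= D r.
  move=> /a2a[ar M1r]; have r0 : 0 < r by apply: le_lt_trans ar.
  by have := hM1 r M1r; rewrite exprS mulrA [r ^+ k * _]mulrC ler_pM2r ?exprn_gt0.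
have Hcmp2 r : a2 < r -> m / 4 * derive1 (fun t => t ^+ 2) r <= derive1 Q r.
  move=> ar; rewrite (hQ r (a2a r ar).1).2 (hd_pow 2 r).2 /= expr1.
  by apply: le_trans (hD r ar); rewrite le_eqVlt; apply/orP; left; apply/eqP; field.
have [M2 hM2] := @grow_lb R Q (fun t => t ^+ 2) a2 (m / 4) (m / 8)
  (fun r ar => (hQ r (a2a r ar).1).1) (fun r ar => (hd_pow 2 r).1) Hcmp2
  (toinf_pow (isT : (0 < 2)%N)) (ltac:(lra)).
have [M3 hM3] := tQ 1 ltr01.
have [M4 hM4] := toinf_pow (isT : (0 < 2)%N) (8 / m).
pose r := Num.max (Num.max M2 M3) M4 + 1.
have [h23 h4] := maxp1 (Num.max M2 M3) M4.
have r2 : M2 < r by apply: le_lt_trans h23; rewrite le_max lexx.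
have r3 : M3 < r by apply: le_lt_trans h23; rewrite le_max lexx orbT.
have := hM2 r r2; have := hM3 r r3; have := hM4 r h4.
rewrite subr0 => H4 H3 H2.
have : 8 / m * (m / 8) < r ^+ 2 * (m / 8) by rewrite ltr_pM2r // divr_gt0.
have -> : 8 / m * (m / 8) = 1 by field; exact: lt0r_neq0.
move=> H5; have := le_lt_trans (ler_norm (Q r)) H3.
rewrite mulrC in H5; lra.
Qed.

Lemma rho_part (P0 : R -> R) c M0 rho :
  (forall r, 0 < r -> derivable P0 r 1 /\ derivable (derive1 P0) r 1) ->
  0 < c -> (forall r, M0 < r -> c * r <= P0 r) ->
  tends (derive1 (derive1 P0)) rho ->
  [/\ tends (fun r => derive1 P0 r / r) rho, tends (fun r => P0 r / r ^+ 2) (rho / 2)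
    & 0 <= rho].
Proof.
move=> dP c0 lb hr.
have t1 : tends (fun r => derive1 P0 r / r) rho.
  apply: (@lhop_inf R (derive1 P0) id 0 rho).
  - by move=> r /dP[].
  - by move=> r _; exact: (hd_id r).1.
  - by move=> r _; rewrite (hd_id r).2.
  - exact: toinf_id.
  apply: (tends_ext (a:=0)) hr => r _; by rewrite (hd_id r).2 divr1.
have t2 : tends (fun r => P0 r / r ^+ 2) (rho / 2).
  apply: (@lhop_inf R P0 (fun t => t ^+ 2) 0 (rho / 2)).
  - by move=> r /dP[].
  - by move=> r _; exact: (hd_pow 2 r).1.
  - by move=> r r0; rewrite (hd_pow 2 r).2 /= expr1 mulr_gt0.
  - exact: toinf_pow.
  have := tendsZ (2^-1) t1; rewrite mulrC; apply: (tends_ext (a:=0)) => r r0.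
  rewrite (hd_pow 2 r).2 /= expr1; field; exact: lt0r_neq0.
split => //.
have : 0 <= rho / 2.
  apply: (tends_ge (a := Num.max M0 0) t2) => r; rewrite gt_max => /andP[Mr r0].
  apply: divr_ge0; last exact: sqr_ge0.
  by apply: le_trans (lb r Mr); rewrite mulr_ge0 // ltW.
by rewrite pmulr_lge0 // invr_gt0.
Qed.


Definition dd (P : R -> R) := forall r, 0 < r -> derivable P r 1 /\ derivable (derive1 P) r 1.
Definition radeq (k : nat) (P Q : R -> R) :=
  forall r, 0 < r -> Q r = derive1 (derive1 P) r + k%:R / r * derive1 P r.

Lemma ode_P2 j (P0 P1 P2 F : R -> R) :
  dd P1 -> dd P2 -> radeq j.+4 P1 P2 -> radeq j.+4 P2 F ->
  (forall r, 0 < r -> 0 < F r) ->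
  (forall e, 0 < e -> exists d, 0 < d /\ forall r, 0 < r -> r < d ->
     `|r ^+ j.+4 * derive1 P2 r| < e) ->
  tends P1 0 ->
  [/\ tends P2 0, forall r, 0 < r -> 0 < derive1 P2 r &
      forall x y, 0 < x -> x <= y -> P2 x <= P2 y].
Proof.
move=> dP1 dP2 e2 e3 Fpos G0 tP1.
set k := j.+4.
pose G := fun t => t ^+ k * derive1 P2 t.
have hG r : 0 < r -> hd G r (r ^+ k * F r).
  by move=> r0; rewrite e3 //; apply: flux => //; case: (dP2 r r0).
have Ginc : forall x y, 0 < x -> x < y -> G x < G y.
  apply: mono_gt0 => r r0; first exact: (hG r r0).1.
  by rewrite (hG r r0).2 mulr_gt0 ?exprn_gt0 ?Fpos.
have Gpos r : 0 < r -> 0 < G r.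
  move=> r0; rewrite ltNge; apply/negP => Gr.
  have r20 : 0 < r / 2 by rewrite divr_gt0.
  have G2 : G (r / 2) < 0.
    apply: lt_le_trans Gr; apply: Ginc => //; rewrite ltr_pdivrMr //; lra.
  have [d [d0 hd']] := G0 (- G (r / 2)) (ltac:(lra)).
  pose s := Num.min (d / 2) (r / 2).
  have s0 : 0 < s by rewrite lt_min r20 divr_gt0.
  have sd : s < d by rewrite /s gt_min; apply/orP; left; rewrite ltr_pdivrMr //; lra.
  have sr : s <= r / 2 by rewrite /s ge_min lexx orbT.
  have Gs : G s <= G (r / 2).
    move: sr; rewrite le_eqVlt => /orP[/eqP -> //| sr]; exact/ltW/Ginc.
  have := hd' s s0 sd; rewrite -/(G s) ltr_norml; lra.
have P2'pos r : 0 < r -> 0 < derive1 P2 r.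
  by move=> r0; have := Gpos r r0; rewrite /G pmulr_rgt0 // exprn_gt0.
have P2inc : forall x y, 0 < x -> x <= y -> P2 x <= P2 y.
  apply: mono_ge0 => r r0; first by case: (dP2 r r0).
  exact/ltW/P2'pos.
have hH r : 0 < r -> hd (fun t => t ^+ k * derive1 P1 t) r (r ^+ k * P2 r).
  by move=> r0; rewrite e2 //; apply: flux => //; case: (dP1 r r0).
have P2le0 r : 0 < r -> P2 r <= 0.
  move=> r0; rewrite leNgt; apply/negP => P2r.
  apply: (@growth k P1 (derive1 P1) P2 r (P2 r)) => //.
  - exact: ltW.
  - by move=> s rs; apply: hd_deriv; case: (dP1 s (lt_trans r0 rs)).
  - by move=> s rs; apply: hH; exact: lt_trans r0 rs.
  - by move=> s rs; apply: P2inc => //; exact: ltW.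
have P2near e : 0 < e -> exists r1, 0 < r1 /\ - e < P2 r1.
  move=> e0; case: (pselect (exists r1, 0 < r1 /\ - e < P2 r1)) => // Hn.
  exfalso; apply: (@growth k (fun t => - P1 t) (fun t => - derive1 P1 t)
     (fun t => - P2 t) 0 e) => //.
  - by move=> s s0; apply: hd_opp; apply: hd_deriv; case: (dP1 s s0).
  - move=> s s0.
    have -> : (fun t => t ^+ k * - derive1 P1 t) = (fun t => - (t ^+ k * derive1 P1 t)).
      by apply: funext => t; rewrite mulrN.
    by rewrite mulrN; apply: hd_opp; apply: hH.
  - move=> s s0; rewrite lerNr leNgt; apply/negP => H; apply: Hn; exists s; split => //.
  - by rewrite -oppr0; apply: tendsN.
split => //.
move=> e e0; have [r1 [r10 hr1]] := P2near e e0; exists r1 => r r1r.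
have r0 : 0 < r by apply: lt_trans r1r.
have := P2inc r1 r r10 (ltW r1r); have := P2le0 r r0.
rewrite subr0 ltr_norml; lra.
Qed.


Lemma ode_G j (P2 F : R -> R) :
  dd P2 -> radeq j.+4 P2 F -> (forall r, 0 < r -> 0 < F r) ->
  (j = 0%N -> exists a (Phi : R -> R) B, 0 <= a /\
     (forall r, a < r -> derivable Phi r 1 /\ r ^+ 4 * F r <= derive1 Phi r) /\
     (forall r, a < r -> Phi r <= B)) ->
  tends (fun r => r ^+ 5 * F r) 0 ->
  exists K0, tends (fun r => r ^+ 4 * derive1 P2 r) K0.
Proof.
move=> dP2 e3 Fpos Fbd Fdec.
have hG r : 0 < r -> hd (fun t => t ^+ j.+4 * derive1 P2 t) r (r ^+ j.+4 * F r).
  by move=> r0; rewrite e3 //; apply: flux => //; case: (dP2 r r0).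
case: j hG Fbd e3 => [|i] hG Fbd e3; last first.
  exists 0.
  have := @lhop_inf R (fun t => t ^+ i.+1.+4 * derive1 P2 t) (fun t => t ^+ i.+1) 0 0
    (fun r r0 => (hG r r0).1) (fun r _ => (hd_pow i.+1 r).1)
    (fun r r0 => ltac:(rewrite (hd_pow i.+1 r).2 /= mulr_gt0 ?exprn_gt0 ?ltr0n //))
    (toinf_pow (isT : (0 < i.+1)%N)).
  have t1 := tendsZ (i.+1%:R)^-1 Fdec; rewrite mulr0 in t1.
  have Eq : forall r, 0 < r -> i.+1%:R^-1 * (r ^+ 5 * F r) =
     derive1 (fun t => t ^+ i.+1.+4 * derive1 P2 t) r / derive1 (fun t => t ^+ i.+1) r.
    move=> r r0; rewrite (hG r r0).2 (hd_pow i.+1 r).2 /=.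
    have E : r ^+ i.+1.+4 = r ^+ i * r ^+ 5 by rewrite -exprD addnC.
    rewrite E; field; rewrite expf_neq0 ?pnatr_eq0 //=; exact: lt0r_neq0.
  move=> /(_ (tends_ext Eq t1)) H.
  apply: (tends_ext (a:=0)) H => r r0.
  have E : r ^+ i.+1.+4 = r ^+ i.+1 * r ^+ 4 by rewrite -exprD addnC.
  rewrite E; field; rewrite expf_neq0 //; exact: lt0r_neq0.
(* j = 0 : monotone bounded *)
have [a [Phi [B [a0 [hPhi hB]]]]] := Fbd erefl.
pose G := fun t => t ^+ 4 * derive1 P2 t.
have Ginc : forall x y, 0 < x -> x <= y -> G x <= G y.
  apply: mono_ge0 => r r0; first exact: (hG r r0).1.
  by rewrite (hG r r0).2 ltW // mulr_gt0 ?exprn_gt0 ?Fpos.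
pose b := a + 1.
have ab : a < b by rewrite ltrDl.
have b0 : 0 < b by apply: le_lt_trans ab.
have dec : forall x y, a < x -> x <= y -> Phi x - G x <= Phi y - G y.
  apply: mono_ge0 => r ar; have r0 : 0 < r by apply: le_lt_trans ar.
    have := hd_sub (hd_deriv (hPhi r ar).1) (hG r r0); by case.
  have := hd_sub (hd_deriv (hPhi r ar).1) (hG r r0); case => _ ->.
  by rewrite subr_ge0; exact: (hPhi r ar).2.
pose Gt := fun t => G (Num.max t b).
have Gtinc : {homo Gt : x y / x <= y}.
  move=> x y xy; apply: Ginc; first by rewrite lt_max b0 orbT.
  by rewrite ge_max !le_max xy lexx orbT.
have Gtb : has_ubound (range Gt).
  exists (B - Phi b + G b) => _ [x _ <-].
  have bx : b <= Num.max x b by rewrite le_max lexx orbT.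
  have := dec b (Num.max x b) ab bx; have := hB (Num.max x b) (lt_le_trans ab bx).
  rewrite /Gt; lra.
have := nondecreasing_cvgr Gtinc Gtb; move=> /tends_cvg H.
exists (sup (range Gt)); apply: (tends_ext (a:=b)) H => r br.
by rewrite /Gt /G (max_idPl (ltW br)).
Qed.


Lemma ode0 j (P0 P1 P2 F : R -> R) c M0 :
  dd P0 -> dd P1 -> dd P2 -> radeq j.+4 P0 P1 -> radeq j.+4 P1 P2 -> radeq j.+4 P2 F ->
  (forall r, 0 < r -> 0 < F r) ->
  (forall e, 0 < e -> exists d, 0 < d /\ forall r, 0 < r -> r < d ->
     `|r ^+ j.+4 * derive1 P2 r| < e) ->
  0 < c -> (forall r, M0 < r -> c * r <= P0 r) ->
  (j = 0%N -> exists a (Phi : R -> R) B, 0 <= a /\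
     (forall r, a < r -> derivable Phi r 1 /\ r ^+ 4 * F r <= derive1 Phi r) /\
     (forall r, a < r -> Phi r <= B)) ->
  tends (fun r => r ^+ 5 * F r) 0 ->
  tends (derive1 (derive1 P0)) 0 ->
  exists A, [/\ tends (fun r => r ^+ 2 * derive1 P1 r) A,
     tends (fun r => P0 r / r) (- A / j.+4%:R) & 0 < - A / j.+4%:R].
Proof.
move=> dP0 dP1 dP2 e1 e2 e3 Fpos G0 c0 lb Fbd Fdec h0.
have [t1 _ _] := rho_part dP0 c0 lb h0.
have tP1 : tends P1 0.
  have := tendsD h0 (tendsZ j.+4%:R t1); rewrite mulr0 addr0.
  apply: (tends_ext (a:=0)) => r r0; rewrite e1 //; field; exact: lt0r_neq0.
have [tP2 P2'pos P2inc] := ode_P2 P0 dP1 dP2 e2 e3 Fpos G0 tP1.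
have [K0 tG] := ode_G dP2 e3 Fpos Fbd Fdec.
have hH r : 0 < r -> hd (fun t => t ^+ j.+4 * derive1 P1 t) r (r ^+ j.+4 * P2 r).
  by move=> r0; rewrite e2 //; apply: flux => //; case: (dP1 r r0).
have hK r : 0 < r -> hd (fun t => t ^+ j.+4 * derive1 P0 t) r (r ^+ j.+4 * P1 r).
  by move=> r0; rewrite e1 //; apply: flux => //; case: (dP0 r r0).
have hg3 (r : R) : 0 < r -> hd (fun t => (t ^+ 3)^-1) r (- (3%:R * r ^+ 2) / (r ^+ 3) ^+ 2).
  move=> r0; apply: hd_inv; first by rewrite expf_neq0 // lt0r_neq0.
  exact: hd_pow.
have t3 : tends (fun r => r ^+ 3 * P2 r) (- K0 / 3).
  have := @lhop0 R P2 (fun t => (t ^+ 3)^-1) 0 (- K0 / 3)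
    (fun r r0 => (dP2 r r0).1) (fun r r0 => (hg3 r r0).1)
    (fun r r0 => ltac:(rewrite (hg3 r r0).2 mulNr oppr_lt0 divr_gt0 ?mulr_gt0 ?exprn_gt0 //))
    tP2 (toinf_inv (toinf_pow (isT : (0 < 3)%N))).
  have Eq : forall r, 0 < r -> (-1/3) * (r ^+ 4 * derive1 P2 r) =
    derive1 P2 r / derive1 (fun t => (t ^+ 3)^-1) r.
    move=> r r0; rewrite (hg3 r r0).2; field; exact: lt0r_neq0.
  have := tendsZ (-1/3) tG.
  have -> : -1/3 * K0 = -K0/3 by rewrite mulrC mulrA mulrN1.
  move=> tG'.
  move=> /(_ (tends_ext Eq tG')) H; apply: (tends_ext (a:=0)) H => r r0.
  by rewrite invrK mulrC.
pose A := (- K0 / 3) / j.+2%:R.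
have tA : tends (fun r => r ^+ 2 * derive1 P1 r) A.
  have := @lhop_inf R (fun t => t ^+ j.+4 * derive1 P1 t) (fun t => t ^+ j.+2) 0 A
    (fun r r0 => (hH r r0).1) (fun r _ => (hd_pow j.+2 r).1)
    (fun r r0 => ltac:(rewrite (hd_pow j.+2 r).2 /= mulr_gt0 ?exprn_gt0 ?ltr0n //))
    (toinf_pow (isT : (0 < j.+2)%N)).
  have Eq : forall r, 0 < r -> j.+2%:R^-1 * (r ^+ 3 * P2 r) =
    derive1 (fun t => t ^+ j.+4 * derive1 P1 t) r / derive1 (fun t => t ^+ j.+2) r.
    move=> r r0; rewrite (hH r r0).2 (hd_pow j.+2 r).2 /=.
    have E : r ^+ j.+4 = r ^+ j.+1 * r ^+ 3 by rewrite -exprD addnC.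
    rewrite E; field; rewrite expf_neq0 ?pnatr_eq0 //=; exact: lt0r_neq0.
  have := tendsZ j.+2%:R^-1 t3; rewrite mulrC -/A => t3'.
  move=> /(_ (tends_ext Eq t3')) H; apply: (tends_ext (a:=0)) H => r r0.
  have E : r ^+ j.+4 = r ^+ j.+2 * r ^+ 2 by rewrite -exprD addnC.
  rewrite E; field; rewrite expf_neq0 //; exact: lt0r_neq0.
have hg1 (r : R) : 0 < r -> hd (fun t => t^-1) r (- 1 / r ^+ 2).
  move=> r0; apply: hd_inv; first exact: lt0r_neq0.
  exact: hd_id.
have tB : tends (fun r => r * P1 r) (- A).
  have := @lhop0 R P1 (fun t => t^-1) 0 (- A)
    (fun r r0 => (dP1 r r0).1) (fun r r0 => (hg1 r r0).1)
    (fun r r0 => ltac:(rewrite (hg1 r r0).2 mulNr oppr_lt0 divr_gt0 ?exprn_gt0 //))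
    tP1 (toinf_inv (@toinf_id R)).
  have Eq : forall r, 0 < r -> - (r ^+ 2 * derive1 P1 r) =
    derive1 P1 r / derive1 (fun t => t^-1) r.
    move=> r r0; rewrite (hg1 r r0).2; field; exact: lt0r_neq0.
  move=> /(_ (tends_ext Eq (tendsN tA))) H; apply: (tends_ext (a:=0)) H => r r0.
  by rewrite invrK mulrC.
have tC : tends (derive1 P0) (- A / j.+4%:R).
  have := @lhop_inf R (fun t => t ^+ j.+4 * derive1 P0 t) (fun t => t ^+ j.+4) 0 (- A / j.+4%:R)
    (fun r r0 => (hK r r0).1) (fun r _ => (hd_pow j.+4 r).1)
    (fun r r0 => ltac:(rewrite (hd_pow j.+4 r).2 /= mulr_gt0 ?exprn_gt0 ?ltr0n //))
    (toinf_pow (isT : (0 < j.+4)%N)).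
  have Eq : forall r, 0 < r -> j.+4%:R^-1 * (r * P1 r) =
    derive1 (fun t => t ^+ j.+4 * derive1 P0 t) r / derive1 (fun t => t ^+ j.+4) r.
    move=> r r0; rewrite (hK r r0).2 (hd_pow j.+4 r).2 /= exprS.
    field; rewrite expf_neq0 ?pnatr_eq0 //=; exact: lt0r_neq0.
  have := tendsZ j.+4%:R^-1 tB; rewrite mulrC => tB'.
  move=> /(_ (tends_ext Eq tB')) H; apply: (tends_ext (a:=0)) H => r r0.
  field; rewrite expf_neq0 //; exact: lt0r_neq0.
have tD : tends (fun r => P0 r / r) (- A / j.+4%:R).
  apply: (@lhop_inf R P0 id 0).
  - by move=> r /dP0[].
  - by move=> r _; exact: (hd_id r).1.
  - by move=> r _; rewrite (hd_id r).2.
  - exact: toinf_id.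
  by apply: (tends_ext (a:=0)) tC => r _; rewrite (hd_id r).2 divr1.
exists A; split => //.
apply: (lt_le_trans c0); apply: (tends_ge (a := Num.max M0 0) tD) => r.
rewrite gt_max => /andP[Mr r0]; rewrite ler_pdivlMr //; exact: lb.
Qed.

End ODE.

Section Multi.
Variable R : realType.
Variable m : nat.
Local Notation n := m.+1.
Implicit Types (x y : 'rV[R]_n) (phi : 'rV[R]_n -> R).

Lemma e1E : @e1 R n = ebasis R ord0.
Proof. by apply/rowP => j; rewrite !mxE eq_sym. Qed.

Lemma sum_sq_ge0 x : 0 <= \sum_i (x ord0 i) ^+ 2.
Proof. by apply: sumr_ge0 => i _; exact: sqr_ge0. Qed.

Lemma enorm_ge0 x : 0 <= enorm x.
Proof. exact: sqrtr_ge0. Qed.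

Lemma enorm_sq x : enorm x ^+ 2 = \sum_i (x ord0 i) ^+ 2.
Proof. by rewrite /enorm sqr_sqrtr // sum_sq_ge0. Qed.

Lemma enorm0 : enorm (0 : 'rV[R]_n) = 0.
Proof. by rewrite /enorm big1 ?sqrtr0 // => i _; rewrite mxE expr0n. Qed.

Lemma enorm_scale_e1 r : enorm (r *: @e1 R n) = `|r|.
Proof.
rewrite e1E /enorm (bigD1 ord0) //= big1 ?addr0 ?mxE ?eqxx ?mulr1 ?sqrtr_sqr //.
by move=> i i0; rewrite !mxE eq_sym (negbTE i0) mulr0 expr0n.
Qed.

Lemma enorm_shift (h : R) (i : 'I_n) y :
  enorm (h *: ebasis R i + y) = Num.sqrt (enorm y ^+ 2 + 2 * y ord0 i * h + h ^+ 2).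
Proof.
rewrite /enorm sqr_sqrtr ?sum_sq_ge0 //; congr Num.sqrt.
rewrite (bigD1 i) //= (bigD1 i (P := predT)) //= !mxE eqxx mulr1.
have -> : \sum_(j < n | j != i) (h *: ebasis R i + y) ord0 j ^+ 2 =
          \sum_(j < n | j != i) y ord0 j ^+ 2.
  by apply: eq_bigr => j ji; rewrite !mxE eq_sym (negbTE ji) mulr0 add0r.
ring.
Qed.

Lemma coord_le x (i : 'I_n) : `|x ord0 i| <= enorm x.
Proof.
rewrite -(sqrtr_sqr (x ord0 i)) /enorm ler_sqrt ?sum_sq_ge0 //.
by rewrite (bigD1 i) //= lerDl; apply: sumr_ge0 => j _; exact: sqr_ge0.
Qed.

Lemma enorm_gt0 x : x != 0 -> 0 < enorm x.
Proof.
move=> x0; rewrite lt_def enorm_ge0 andbT; apply/negP => /eqP h.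
move: x0; apply/negP; rewrite negbK; apply/eqP/rowP => i; rewrite mxE.
have := coord_le x i; rewrite h normr_le0 => /eqP //.
Qed.

Lemma derive_line phi a v : 'D_v phi a = derive1 (fun h => phi (h *: v + a)) 0.
Proof.
rewrite /derive /derive1; set d := (fun _ : R => _); set d' := (fun _ : R => _).
by suff -> : d = d' by []; apply: funext => h; rewrite /d /d' /= addr0 scale0r add0r.
Qed.

Lemma profile_derive phi r :
  derive1 (fun s => phi (s *: @e1 R n)) r = partial ord0 phi (r *: @e1 R n).
Proof.
rewrite /partial /derive /derive1 e1E; set d := (fun _ : R => _); set d' := (fun _ : R => _).
by suff -> : d = d' by []; apply: funext => h; rewrite /d /d' /= scalerDl.
Qed.

Lemma profile_derivable phi r :
  derivable phi (r *: @e1 R n) (ebasis R ord0) -> derivable (fun s : R => phi (s *: @e1 R n)) r 1.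
Proof.
have E : (fun h : R => h^-1 *: (((fun s : R => phi (s *: @e1 R n)) \o shift r) (h *: 1) - phi (r *: @e1 R n))) =
  (fun h : R => h^-1 *: ((phi \o shift (r *: @e1 R n)) (h *: ebasis R ord0) - phi (r *: @e1 R n))).
  by apply: funext => h /=; rewrite e1E scalerDl /GRing.scale /= mulr1.
by rewrite /derivable E.
Qed.



Lemma shift_ne0 (i : 'I_n) y (h : R) : `|h| < enorm y ->
  0 < enorm y ^+ 2 + 2 * y ord0 i * h + h ^+ 2.
Proof.
move=> hy; have cy := coord_le y i; have h0 := normr_ge0 h.
have e1 : - (y ord0 i * h) <= enorm y * `|h|.
  apply: le_trans (ler_norm _) _; rewrite normrN normrM; exact: ler_wpM2r.
have e2 : h ^+ 2 = `|h| ^+ 2 by rewrite real_normK ?num_real.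
rewrite e2; nra.
Qed.

Lemma hd_N (i : 'I_n) y : y != 0 ->
  hd (fun h => enorm (h *: ebasis R i + y)) 0 (y ord0 i / enorm y).
Proof.
move=> y0; have s0 := enorm_gt0 y0; set s := enorm y in s0 *.
have -> : (fun h => enorm (h *: ebasis R i + y)) =
          (fun h => Num.sqrt (s ^+ 2 + 2 * y ord0 i * h + h ^+ 2)).
  by apply: funext => h; rewrite enorm_shift.
have hQ : hd (fun h => s ^+ 2 + 2 * y ord0 i * h + h ^+ 2) 0 (2 * y ord0 i).
  apply: hd_eq; first exact: hd_add (hd_add (hd_cst _ _) (hd_scale _ (hd_id _))) (hd_pow 2 0).
  by rewrite add0r mulr1 expr1 mulr0 addr0.
have Q0 : s ^+ 2 + 2 * y ord0 i * 0 + 0 ^+ 2 = s ^+ 2 by rewrite mulr0 addr0 expr0n addr0.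
have hS : hd Num.sqrt (s ^+ 2 + 2 * y ord0 i * 0 + 0 ^+ 2) (2 * s)^-1.
  by rewrite Q0; apply: hd_eq; [apply: hd_sqrt; exact: exprn_gt0| rewrite sqrtr_sqr gtr0_norm].
apply: hd_eq; first exact: hd_comp hQ hS.
by field; exact: lt0r_neq0.
Qed.

Lemma near_ne0 (i : 'I_n) y : y != 0 -> \forall h \near (0 : R), h *: ebasis R i + y != 0.
Proof.
move=> y0; have s0 := enorm_gt0 y0.
near=> h; apply/eqP => E.
have : 0 < enorm (h *: ebasis R i + y).
  rewrite enorm_shift sqrtr_gt0; apply: shift_ne0.
  near: h; exact: (@nbhs0_lt R R^o _ s0).
by rewrite E enorm0 ltxx.
Unshelve. all: by end_near.
Qed.


Definition radial phi (p : R -> R) := forall z, z != 0 -> phi z = p (enorm z).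

Lemma partial_rad phi p (i : 'I_n) y : radial phi p -> y != 0 ->
  derivable p (enorm y) 1 ->
  partial i phi y = derive1 p (enorm y) * (y ord0 i / enorm y).
Proof.
move=> rad y0 dp.
rewrite /partial derive_line.
have hN := hd_N i y0.
have N0 : enorm (0 *: ebasis R i + y) = enorm y by rewrite scale0r add0r.
have hp : hd p (enorm (0 *: ebasis R i + y)) (derive1 p (enorm y)).
  by rewrite N0; exact: hd_deriv.
have hc := hd_comp hN hp.
have H := @hd_ext R _ (fun h : R => phi (h *: ebasis R i + y)) 0 _ _ hc.
case: H => [|_ ->]; last by rewrite mulrC.
have hx := near_ne0 i y0; move: hx; apply: filterS => h hne.
by rewrite rad.
Unshelve. all: by end_near.
Qed.

Lemma partial2_rad phi p (i : 'I_n) x : radial phi p -> x != 0 ->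
  (forall r, 0 < r -> derivable p r 1) -> derivable (derive1 p) (enorm x) 1 ->
  partial i (partial i phi) x =
  derive1 (derive1 p) (enorm x) * (x ord0 i / enorm x) ^+ 2 +
  derive1 p (enorm x) * ((enorm x)^-1 - (x ord0 i) ^+ 2 / enorm x ^+ 3).
Proof.
move=> rad x0 dp dp'.
have s0 := enorm_gt0 x0; set s := enorm x in s0 dp' *.
rewrite {1}/partial derive_line.
have hN := hd_N i x0.
have N0 : enorm (0 *: ebasis R i + x) = s by rewrite scale0r add0r.
have hp : hd (derive1 p) (enorm (0 *: ebasis R i + x)) (derive1 (derive1 p) s).
  by rewrite N0; exact: hd_deriv.
have hc := hd_comp hN hp.
have hl : hd (fun h : R => h + x ord0 i) 0 1.
  by apply: hd_eq; [exact: hd_add (hd_id _) (hd_cst _ _)| rewrite addr0].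
have Nne : enorm (0 *: ebasis R i + x) != 0 by rewrite N0; exact: lt0r_neq0.
have hi := hd_inv (f := fun h => enorm (h *: ebasis R i + x)) Nne hN.
have hm := hd_mul hc (hd_mul hl hi).
have H := @hd_ext R _ (fun h : R => partial i phi (h *: ebasis R i + x)) 0 _ _ hm.
case: H => [|_ ->].
  have hx := near_ne0 i x0; move: hx; apply: filterS => h hne.
  rewrite (@partial_rad phi p i) //; last by apply: dp; exact: enorm_gt0.
  by rewrite !mxE eqxx mulr1.
rewrite N0 /= add0r -/s; field; exact: lt0r_neq0.
Unshelve. all: by end_near.
Qed.

Lemma lap_rad phi p x : radial phi p -> x != 0 ->
  (forall r, 0 < r -> derivable p r 1) -> derivable (derive1 p) (enorm x) 1 ->
  lap phi x = derive1 (derive1 p) (enorm x) + (n%:R - 1) / enorm x * derive1 p (enorm x).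
Proof.
move=> rad x0 dp dp'.
have s0 := enorm_gt0 x0; have ss := enorm_sq x.
set s := enorm x in s0 ss dp' *.
rewrite /lap (eq_bigr (fun i => (derive1 (derive1 p) s / s ^+ 2 - derive1 p s / s ^+ 3)
   * x ord0 i ^+ 2 + derive1 p s / s)); last first.
  by move=> i _; rewrite (partial2_rad i rad x0 dp dp') -/s; field; exact: lt0r_neq0.
rewrite big_split /= -mulr_sumr -ss sumr_const card_ord -mulr_natr.
field; exact: lt0r_neq0.
Qed.


Lemma partialD phi psi (i : 'I_n) : (forall x, derivable phi x (ebasis R i)) ->
  (forall x, derivable psi x (ebasis R i)) ->
  partial i (fun x => phi x + psi x) = (fun x => partial i phi x + partial i psi x).
Proof. by move=> d1 d2; apply: funext => x; rewrite /partial deriveD. Qed.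

Lemma CkD k phi psi : Ck k phi -> Ck k psi -> Ck k (fun x => phi x + psi x).
Proof.
elim: k phi psi => [|k IH] phi psi /=.
  by move=> c1 c2 x; apply: continuousD; [exact: c1| exact: c2].
move=> [c1 [d1 C1]] [c2 [d2 C2]]; split.
  by move=> x; apply: continuousD; [exact: c1| exact: c2].
split; first by move=> i x; apply: derivableD.
by move=> i; rewrite partialD //; apply: IH.
Qed.

Lemma Ck_cst k (c : R) : Ck k (fun _ : 'rV[R]_n => c).
Proof.
elim: k => [|k IH] /=; first exact: cst_continuous.
split; first exact: cst_continuous.
split; first by move=> i x; exact: derivable_cst.
move=> i; have -> : partial i (fun _ : 'rV[R]_n => c) = (fun=> 0).
  by apply: funext => x; rewrite /partial derive_cst.
elim: k {IH} => [|k IH] /=; first exact: cst_continuous.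
split; first exact: cst_continuous.
split; first by move=> j x; exact: derivable_cst.
move=> j; have -> : partial j (fun _ : 'rV[R]_n => (0 : R)) = (fun=> 0).
  by apply: funext => x; rewrite /partial derive_cst.
exact: IH.
Qed.

Lemma Ck_sum k (F : 'I_n -> 'rV[R]_n -> R) : (forall i, Ck k (F i)) ->
  forall s : seq 'I_n, Ck k (fun x => \sum_(i <- s) F i x).
Proof.
move=> CF; elim => [|a s IH].
  have -> : (fun x => \sum_(i <- [::]) F i x) = (fun _ : 'rV[R]_n => 0).
    by apply: funext => x; rewrite big_nil.
  exact: Ck_cst.
have -> : (fun x => \sum_(i <- a :: s) F i x) = (fun x => F a x + \sum_(i <- s) F i x).
  by apply: funext => x; rewrite big_cons.
exact: CkD.
Qed.

Lemma Ck_S k phi : Ck k.+1 phi -> Ck k phi.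
Proof.
elim: k phi => [|k IH] phi; first by case.
move=> [c [d C]]; split => //; split => // i; exact: IH.
Qed.

Lemma Ck_lap k phi : Ck k.+2 phi -> Ck k (lap phi).
Proof.
move=> [_ [_ C]].
have C2 i : Ck k (partial i (partial i phi)).
  by have [_ [_ C']] := C i; apply: C'.
exact: (Ck_sum C2 (index_enum 'I_n)).
Qed.

Definition prof phi := fun r : R => phi (r *: @e1 R n).

Lemma prof_cont phi : continuous phi -> continuous (prof phi).
Proof.
move=> c r; rewrite /prof.
apply: (@continuous_comp _ _ _ (fun s : R => s *: @e1 R n) phi).
  exact: scalel_continuous.
exact: c.
Qed.

Lemma prof_derive1 phi : derive1 (prof phi) = prof (partial ord0 phi).
Proof. by apply: funext => r; rewrite /prof profile_derive. Qed.

Lemma prof_dd phi : Ck 2 phi ->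
  (forall r, derivable (prof phi) r 1 /\ derivable (derive1 (prof phi)) r 1) /\
  continuous (prof phi) /\ continuous (derive1 (prof phi)).
Proof.
move=> [c [d C]]; have [c1 [d1 _]] := C ord0.
rewrite prof_derive1; split; last by split; apply: prof_cont.
move=> r; split; apply: profile_derivable; [exact: d| exact: d1].
Qed.


Lemma scale_e1_ne0 (r : R) : 0 < r -> r *: @e1 R n != 0.
Proof.
move=> r0; apply/eqP => E; have := enorm_scale_e1 r.
by rewrite E enorm0 gtr0_norm // => H; move: r0; rewrite -H ltxx.
Qed.

Lemma lift_rad phi : Ck 2 phi -> radial phi (prof phi) ->
  radial (lap phi) (prof (lap phi)) /\
  (forall r, 0 < r -> prof (lap phi) r =
     derive1 (derive1 (prof phi)) r + (n%:R - 1) / r * derive1 (prof phi) r).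
Proof.
move=> C rad; have [dP _] := prof_dd C.
have form x : x != 0 -> lap phi x = derive1 (derive1 (prof phi)) (enorm x) +
   (n%:R - 1) / enorm x * derive1 (prof phi) (enorm x).
  by move=> x0; exact: (lap_rad rad x0 (fun r _ => (dP r).1) (dP _).2).
have hb r : 0 < r -> prof (lap phi) r =
     derive1 (derive1 (prof phi)) r + (n%:R - 1) / r * derive1 (prof phi) r.
  move=> r0; rewrite /prof form; last exact: scale_e1_ne0.
  by rewrite enorm_scale_e1 gtr0_norm.
split => // z z0; rewrite form // hb //; exact: enorm_gt0.
Qed.

Lemma rad_u (u : 'rV[R]_n -> R) : (forall x y, enorm x = enorm y -> u x = u y) ->
  radial u (prof u).
Proof.
move=> h z z0; rewrite /prof; apply: h.
by rewrite enorm_scale_e1 ger0_norm // enorm_ge0.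
Qed.

End Multi.

Section Integ.
Variable R : realType.

Lemma near_pos (t : R) : 0 < t -> \forall s \near t, 0 < s.
Proof.
move=> t0; apply/nbhs_ballP; exists t => // s; rewrite /ball /= => h.
have := ler_norm (t - s); lra.
Qed.

Lemma integral_part k (W V P1 P2 : R -> R) (A : R) :
  (forall t, 0 < t -> derive1 W t = derive1 P1 t) ->
  (forall t, 0 < t -> V t = P2 t) ->
  (forall t, 0 < t -> derivable P1 t 1 /\ derivable (derive1 P1) t 1) ->
  radeq k P1 P2 -> continuous P2 -> continuous (derive1 P1) ->
  tends (fun r => r ^+ 2 * derive1 P1 r) A ->
  Rintegral lebesgue_measure `[0, M] (fun t => t ^+ 2 * (V t - (k.+1%:R - 3) / t * derive1 W t))
    @[M --> +oo] --> A.
Proof.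
move=> hW hV dP1 e2 cP2 cP1 tA.
set g := fun t => t ^+ 2 * (V t - (k.+1%:R - 3) / t * derive1 W t).
pose F := fun t => t ^+ 2 * derive1 W t.
pose F1 := fun t => t ^+ 2 * derive1 P1 t.
pose gh := fun t => t ^+ 2 * P2 t - (k.+1%:R - 3) * t * derive1 P1 t.
have FF1 (t : R) : 0 < t -> {near t, F1 =1 F}.
  move=> t0; near=> s; rewrite /F /F1 hW //; near: s; exact: near_pos.
have hF1 (t : R) : 0 < t -> hd F1 t (2%:R * t * derive1 P1 t + t ^+ 2 * derive1 (derive1 P1) t).
  move=> t0; apply: hd_eq; first exact: hd_mul (hd_pow 2 t) (hd_deriv (dP1 t t0).2).
  by rewrite /= expr1.
have hF (t : R) : 0 < t -> hd F t (2%:R * t * derive1 P1 t + t ^+ 2 * derive1 (derive1 P1) t).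
  by move=> t0; apply: hd_ext (FF1 t t0) (hF1 t t0).
have cgh : continuous gh.
  move=> t; rewrite /gh; apply: cvgB.
    apply: cvgM; last exact: cP2.
    exact: exprn_continuous.
  apply: cvgM; last exact: cP1.
  apply: cvgM; first exact: cvg_cst.
  exact: cvg_id.
have cF1 : continuous F1.
  move=> t; rewrite /F1; apply: cvgM; last exact: cP1.
  exact: exprn_continuous.
have eqI (M : R) : 0 < M -> Rintegral lebesgue_measure `[0, M] g = F M.
  move=> M0.
  have H := @continuous_FTC2 R g F 0 M M0.
  rewrite /Rintegral H.
  - by rewrite -EFinB /= /F expr0n /= mul0r subr0.
  - apply: (@subspace_eq_continuous _ _ _ gh g); last exact: continuous_subspaceT.
    move=> t; rewrite inE /= in_itv /= => /andP[t0 tM].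
    move: t0; rewrite le_eqVlt => /orP[/eqP <-|t0].
      by rewrite /g /gh expr0n /= !mul0r mulr0 !mul0r subrr.
    rewrite /g /gh hV // hW //; field; exact: lt0r_neq0.
  - split.
    + by move=> t; rewrite in_itv /= => /andP[t0 _]; exact: (hF t t0).1.
    + have -> : F 0 = F1 0 by rewrite /F /F1 expr0n /= !mul0r.
      apply: cvg_trans; last exact: cvg_at_right_filter (cF1 0).
      apply: near_eq_cvg; apply: filterS (@nbhs_right_gt R 0) => s s0.
      by rewrite /F /F1 hW.
    + apply: cvg_at_left_filter.
      apply: differentiable_continuous; apply/derivable1_diffP.
      exact: (hF M M0).1.
  - move=> t; rewrite in_itv /= => /andP[t0 _].
    rewrite (hF t t0).2 /g hV // hW // e2 //; field; exact: lt0r_neq0.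
apply/tends_cvg; apply: (tends_ext (a := 0)) tA => M M0.
by rewrite eqI // /F hW.
Unshelve. all: by end_near.
Qed.
End Integ.

Section PowStuff.
Variable R : realType.

Lemma powR_le_neg (a b q : R) : 0 < a -> a <= b -> 0 < q -> b `^ (-q) <= a `^ (-q).
Proof.
move=> a0 ab q0; rewrite !powRN lef_pV2 ?posrE ?powR_gt0 //; last exact: lt_le_trans ab.
by apply: ge0_ler_powR => //; rewrite ?nnegrE ltW // (lt_le_trans a0).
Qed.

Lemma toinf_powR (a : R) : 0 < a -> toinf (fun r => r `^ a).
Proof.
move=> a0 B; pose b := Num.max B 1.
have b1 : 1 <= b by rewrite le_max lexx orbT.
exists (b `^ a^-1) => r hr.
have E : (b `^ a^-1) `^ a = b by rewrite -powRrM mulVf ?gt_eqF // powRr1 // (le_trans ler01).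
apply: (@le_lt_trans _ _ b); first by rewrite le_max lexx.
rewrite -{1}E; apply: gt0_ltr_powR => //; rewrite ?nnegrE ?powR_ge0 //.
by apply: le_trans (ltW hr); rewrite powR_ge0.
Qed.

Lemma squeeze0 (f g : R -> R) a : tends g 0 -> (forall r, a < r -> 0 <= f r <= g r) ->
  tends f 0.
Proof.
move=> tg hfg e e0; have [M hM] := tg e e0; exists (Num.max M a) => r.
rewrite gt_max => /andP[Mr ar]; have := hM r Mr; have /andP[h1 h2] := hfg r ar.
rewrite !subr0 !ger0_norm //; last exact: le_trans h2.
by apply: le_lt_trans.
Qed.

Lemma pow_identity (c r q : R) (k : nat) : 0 < c -> 0 < r ->
  r ^+ k * (c * r) `^ (-q) = c `^ (-q) * r `^ (k%:R - q).
Proof.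
move=> c0 r0; rewrite powRM ?ltW // -powR_mulrn ?ltW // mulrCA -powRD //.
by apply/implyP => _; exact: lt0r_neq0.
Qed.

Lemma hd_powR (a r : R) : 0 < r -> hd (fun t => t `^ a) r (a * r `^ (a - 1)).
Proof.
move=> r0; have h := is_derive1_powR a r0; split; first exact: ex_derive.
by rewrite derive1E derive_val.
Qed.

End PowStuff.

Unset Implicit Arguments. Set Strict Implicit.

Section Aux.
Variable R : realType.

Lemma derive1_near (f g : R -> R) t : {near t, f =1 g} -> derive1 f t = derive1 g t.
Proof. by move=> h; rewrite !derive1E; apply: near_eq_derive. Qed.

Lemma radlap_flux k (f : R -> R) t : (0 < k)%N -> 0 < t -> derivable (derive1 f) t 1 ->
  radlap k.+1 f t = derive1 (derive1 f) t + k%:R / t * derive1 f t.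
Proof.
move=> k0 t0 d; rewrite /radlap /= (flux k0 t0 d).2 mulrA mulVf ?mul1r //.
by rewrite expf_neq0 // lt0r_neq0.
Qed.

End Aux.

Theorem mainTheorem8 (R : realType) (n : nat) (q rho : R)
  (u : 'rV[R]_n -> R) :
  (5 <= n)%N -> 5 < q ->
  Ck 6 u ->
  (forall x, 0 < u x) ->
  (forall x y, enorm x = enorm y -> u x = u y) ->
  (forall x, lap (lap (lap u)) x = powR (u x) (- q)) ->
  (* liminf_{|x| -> oo} u(x)/|x| lies in (0, +oo] *)
  (exists c : R, 0 < c /\ exists M : R, forall x, M < enorm x -> c <= u x / enorm x) ->
  (* u''(r) -> rho as r -> +oo, where u(r) = u(r e_1) *)
  (derive1 (derive1 (fun r : R => u (r *: @e1 R n))) r @[r --> +oo] --> rho) ->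
  0 <= rho /\
  (0 < rho ->
     forall eps : R, 0 < eps -> exists M : R, forall x, M < enorm x ->
       `| u x / enorm x ^+ 2 - rho / 2 | < eps) /\
  (rho = 0 ->
     let ub := fun r : R => u (r *: @e1 R n) in
     let g := fun t : R =>
       t ^+ 2 * (radlap n (radlap n ub) t
                 - (n%:R - 3) / t * derive1 (radlap n ub) t) in
     exists I : R,
       (* I = \int_0^{+oo} g(t) dt, as an improper integral *)
       (Rintegral lebesgue_measure `[0, M] g @[M --> +oo] --> I) /\
       0 < - I / (n%:R - 1) /\
       forall eps : R, 0 < eps -> exists M : R, forall x, M < enorm x ->
         `| u x / enorm x - (- I / (n%:R - 1)) | < eps).
Proof.
move=> n5 q5 Cu upos urad hpde hlim hrho.
have [j Ej] : exists j, n = j.+4.+1.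
  by exists (n - 5)%N; rewrite -[in LHS](subnK n5) addnC.
subst n.
pose phi1 := lap u; pose phi2 := lap phi1; pose phi3 := lap phi2.
have C1 : Ck 4 phi1 by apply: Ck_lap.
have C2 : Ck 2 phi2 by apply: Ck_lap.
have Cu2 : Ck 2 u by do 4 apply: Ck_S.
pose P0 := prof u; pose P1 := prof phi1; pose P2 := prof phi2.
have [dP0 [cP0 cP0']] := prof_dd Cu2.
have [dP1 [cP1 cP1']] := prof_dd (Ck_S (Ck_S C1)).
have [dP2 [cP2 cP2']] := prof_dd C2.
have rad0 := rad_u urad.
have [rad1 e1'] := lift_rad Cu2 rad0.
have [rad2 e2'] := lift_rad (Ck_S (Ck_S C1)) rad1.
have [_ e3'] := lift_rad C2 rad2.
have nk : ((j.+4.+1)%:R - 1 : R) = j.+4%:R by rewrite -[j.+4.+1%:R]natr1 addrK.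
rewrite nk in e1' e2' e3'.
pose F := fun r => powR (P0 r) (- q).
have hF r : prof phi3 r = F r by rewrite /prof /phi3 /phi2 /phi1 hpde.
have ddP0 : dd P0 by move=> r _; exact: dP0.
have ddP1 : dd P1 by move=> r _; exact: dP1.
have ddP2 : dd P2 by move=> r _; exact: dP2.
have re1 : radeq j.+4 P0 P1 by move=> r r0; exact: e1'.
have re2 : radeq j.+4 P1 P2 by move=> r r0; exact: e2'.
have re3 : radeq j.+4 P2 F by move=> r r0; rewrite -hF; exact: e3'.
have Fpos r : 0 < r -> 0 < F r by move=> _; apply: powR_gt0; exact: upos.
have [c [c0 [M0 hM0]]] := hlim.
have lb r : Num.max M0 0 < r -> c * r <= P0 r.
  rewrite gt_max => /andP[Mr r0].
  have := hM0 (r *: @e1 R j.+4.+1); rewrite enorm_scale_e1 gtr0_norm // => /(_ Mr).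
  by rewrite ler_pdivlMr.
have G0 e : 0 < e -> exists d, 0 < d /\ forall r, 0 < r -> r < d ->
     `|r ^+ j.+4 * derive1 P2 r| < e.
  move=> e0.
  have cf : {for 0, continuous (fun t : R => t ^+ j.+4 * derive1 P2 t)}.
    apply: cvgM; [exact: exprn_continuous| exact: cP2'].
  have := cf; move=> /cvgrPdist_lt /(_ e e0) /nbhs_ballP [d d0 hd].
  exists d; split => // r r0 rd.
  have := hd r; rewrite /ball /= expr0n /= mul0r !sub0r !normrN; apply.
  by rewrite gtr0_norm.
have tr : tends (derive1 (derive1 P0)) rho by apply/tends_cvg.
have [t1 t2 rho0] := rho_part ddP0 c0 lb tr.
have q50 : 0 < q - 5 by rewrite subr_gt0.
pose a1 := Num.max M0 0.
have a1M r : a1 < r -> 0 < r /\ c * r <= P0 r.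
  by move=> ar; split; [move: ar; rewrite gt_max => /andP[] | exact: lb].
have Fle r : a1 < r -> F r <= (c * r) `^ (- q).
  move=> /a1M[r0 lr]; apply: powR_le_neg => //; last exact: lt_trans q5.
  exact: mulr_gt0.
have Fdec : tends (fun r => r ^+ 5 * F r) 0.
  have tg : tends (fun r => c `^ (- q) * r `^ (5 - q)) 0.
    have := tendsZ (c `^ (- q)) (toinf_inv (toinf_powR q50)); rewrite mulr0.
    apply: (tends_ext (a := 0)) => r r0.
    by rewrite -powRN opprB.
  apply: (squeeze0 (a := a1) tg) => r ar; have [r0 _] := a1M r ar.
  rewrite mulr_ge0 ?exprn_ge0 ?powR_ge0 ?(ltW r0) //=.
  rewrite -(pow_identity q 5 c0 r0) ler_pM2l ?exprn_gt0 //; exact: Fle.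
have Fbd : j = 0%N -> exists a (Phi : R -> R) B, 0 <= a /\
     (forall r, a < r -> derivable Phi r 1 /\ r ^+ 4 * F r <= derive1 Phi r) /\
     (forall r, a < r -> Phi r <= B).
  move=> _; exists a1, (fun r => c `^ (- q) / (5 - q) * r `^ (5 - q)), 0.
  split; first by rewrite le_max lexx orbT.
  split => r ar; have [r0 _] := a1M r ar.
    have hP := hd_scale (c `^ (- q) / (5 - q)) (hd_powR (5 - q) r0).
    split; first exact: hP.1.
    rewrite hP.2; apply: (@le_trans _ _ (r ^+ 4 * (c * r) `^ (- q))).
      by rewrite ler_pM2l ?exprn_gt0 //; exact: Fle.
    rewrite (pow_identity q 4 c0 r0).
    have -> : (5 - q - 1 : R) = 4%:R - q by lra.
    rewrite le_eqVlt; apply/orP; left; apply/eqP; field.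
    by rewrite subr_eq0; apply/eqP => E; move: q5; rewrite -E ltxx.
  have h1 : 0 <= c `^ (- q) / (q - 5) * r `^ (5 - q).
    by rewrite mulr_ge0 ?divr_ge0 ?powR_ge0 ?ltW.
  have -> : c `^ (- q) / (5 - q) = - (c `^ (- q) / (q - 5)).
    by field; apply/andP; split; rewrite subr_eq0; apply/eqP => E; move: q5; rewrite ?E ltxx // -E ltxx.
  lra.
split; first exact: rho0.
have xne (x : 'rV[R]_j.+4.+1) (M : R) : Num.max M 0 < enorm x -> x != 0 /\ M < enorm x.
  rewrite gt_max => /andP[Mx x0]; split => //.
  by apply/eqP => E; move: x0; rewrite E enorm0 ltxx.
split.
  move=> rpos eps e0; have [M hM] := t2 eps e0; exists (Num.max M 0) => x /xne[x0 Mx].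
  by rewrite rad0 //; exact: hM.
move=> rz ub g.
rewrite rz in tr.
have [A [tA tP tpos]] := ode0 ddP0 ddP1 ddP2 re1 re2 re3 Fpos G0 c0 lb Fbd Fdec tr.
have hW t : 0 < t -> derive1 (radlap j.+4.+1 ub) t = derive1 P1 t.
  move=> t0; apply: derive1_near; near=> s.
  have s0 : 0 < s by near: s; exact: near_pos.
  by rewrite (radlap_flux R j.+4 ub s isT s0 (dP0 s).2) // re1.
have hV t : 0 < t -> radlap j.+4.+1 (radlap j.+4.+1 ub) t = P2 t.
  move=> t0; rewrite /radlap /=.
  rewrite (@derive1_near R _ (fun s => s ^+ j.+4 * derive1 P1 s)); last first.
    near=> s; rewrite hW //; near: s; exact: near_pos.
  have := radlap_flux R j.+4 P1 t isT t0 (dP1 t).2.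
  by rewrite /radlap /= => ->; rewrite re2.
exists A; split.
  apply: (@integral_part R j.+4 (radlap j.+4.+1 ub) (radlap j.+4.+1 (radlap j.+4.+1 ub)) P1 P2 A hW hV).
  - by move=> t _; exact: dP1.
  - exact: re2.
  - exact: cP2.
  - exact: cP1'.
  - exact: tA.
rewrite nk; split => // eps e0; have [M hM] := tP eps e0.
exists (Num.max M 0) => x /xne[x0 Mx].
by rewrite rad0 //; exact: hM.
Unshelve. all: by end_near.
Qed.
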